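(* Every $\alpha$-pairing can be transformed by the moves $M_1,M_2$ into a primitive $\alpha$-pairing. Two homologous primitive $\alpha$-pairings are isomorphic.
   Context: Fix a set $\alpha$ with an involution $\tau$, and let $\pi$ be the multiplicative abelian group generated by the elements of $\alpha$ with relations $a\,\tau(a)=1$. A pairing $b:S\times S\to\pi$ is skew-symmetric if $b(A,B)=b(B,A)^{-1}$ and $b(A,A)=1$ for all $A,B$. An $\alpha$-pairing is a triple $(S,s,b)$: a set $S$ with a distinguished element $s\in S$, a map $S\setminus\{s\}\to\alpha$, $A\mapsto|A|$, and a skew-symmetric pairing $b:S\times S\to\pi$. Two $\alpha$-pairings $(S,s,b),(S',s',b')$ are isomorphic if there is a bijection $S\to S'$ sending $s$ to $s'$, preserving $|\cdot|$ on $S\setminus\{s\}$, and carrying $b$ to $b'$. An element $A\in S\setminus\{s\}$ is annihilating if $b(A,C)=1$ for all $C\in S$. Elements $A,B\in S\setminus\{s\}$ are twins if $|A|=\tau(|B|)$ and $b(A,C)=b(B,C)$ for all $C\in S$. Move $M_1$ deletes an annihilating element $A$, replacing $(S,s,b)$ by $(S\setminus\{A\},s,b|)$; move $M_2$ deletes a pair of twins $A,B$, replacing $(S,s,b)$ by $(S\setminus\{A,B\},s,b|)$. Two $\alpha$-pairings are homologous if they are related by a finite sequence of moves $M_1,M_2$, their inverses, and isomorphisms. An $\alpha$-pairing is primitive if it has no annihilating elements and no pairs of twins. *)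

(* Defs.v *)
From HB Require Import structures.
From mathcomp Require Import all_boot.

Set Implicit Arguments.
Unset Strict Implicit.
Unset Printing Implicit Defensive.

Section AlphaPairings.

Variables (alpha : Type) (tau : alpha -> alpha).

(* The group pi: the abelian group generated by the elements of alpha *)
(* with relations a * tau(a) = 1, given by a monoid presentation.     *)
(* An element is represented by a word in the generators a^{+-1}:     *)
(* (a, true) stands for a, (a, false) for a^{-1}.  Equality in pi is  *)
Definition piword := seq (alpha * bool).
Definition pone : piword := [::].
Definition pmul (u v : piword) : piword := u ++ v.
Definition pinv (u : piword) : piword := rev (map (fun x => (x.1, ~~ x.2)) u).

Inductive pi_eq : piword -> piword -> Prop :=
  | pi_refl u : pi_eq u u
  | pi_sym u v : pi_eq u v -> pi_eq v u
  | pi_trans u v w : pi_eq u v -> pi_eq v w -> pi_eq u w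
  | pi_cat u1 u2 v1 v2 : pi_eq u1 u2 -> pi_eq v1 v2 -> pi_eq (pmul u1 v1) (pmul u2 v2)
  | pi_comm x y : pi_eq [:: x; y] [:: y; x]
  | pi_inv a : pi_eq [:: (a, true); (a, false)] pone
  | pi_rel a : pi_eq [:: (a, true); (tau a, true)] pone.

(* alpha-pairings.  The set S with distinguished element s is         *)
(* represented as option T with s = None; thus S \ {s} = T.            *)
Record apairing := APairing {
  carrier : finType;
  lab : carrier -> alpha;
  pb : option carrier -> option carrier -> piword;
  pb_skew : forall x y, pi_eq (pb x y) (pinv (pb y x));
  pb_diag : forall x, pi_eq (pb x x) pone
}.
Arguments lab : clear implicits.
Arguments pb : clear implicits.

(* Isomorphism: bijection S -> S' sending s to s' (= option lift of a *)
(* bijection T -> T'), preserving |.| and carrying b to b'.           *)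
Definition apiso (P Q : apairing) : Prop :=
  exists f : carrier P -> carrier Q,
    [/\ bijective f,
        forall x, lab Q (f x) = lab P x &
        forall x y, pi_eq (pb Q (omap f x) (omap f y)) (pb P x y)].

Definition annihilating (P : apairing) (A : carrier P) : Prop :=
  forall C, pi_eq (pb P (Some A) C) pone.

Definition twins (P : apairing) (A B : carrier P) : Prop :=
  [/\ A <> B, lab P A = tau (lab P B) &
      forall C, pi_eq (pb P (Some A) C) (pb P (Some B) C)].

Arguments annihilating : clear implicits.
Arguments twins : clear implicits.

Definition primitive (P : apairing) : Prop :=
  (forall A, ~ annihilating P A) /\ (forall A B, ~ twins P A B).

Definition restrict (P : apairing) (keep : pred (carrier P)) : apairing.
Proof.
refine (@APairing {x : carrier P | keep x} (fun x => lab P (val x))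
          (fun x y => pb P (omap val x) (omap val y)) _ _).
- by move=> x y; apply: pb_skew.
- by move=> x; apply: pb_diag.
Defined.

Inductive move (P : apairing) : apairing -> Prop :=
  | move_M1 (A : carrier P) :
      annihilating P A -> move P (restrict (predC1 A))
  | move_M2 (A B : carrier P) :
      twins P A B -> move P (restrict [pred x | (x != A) && (x != B)]).

Inductive reduces : apairing -> apairing -> Prop :=
  | red_refl P : reduces P P
  | red_step P Q R : move P Q -> reduces Q R -> reduces P R.

Inductive homologous : apairing -> apairing -> Prop :=
  | hom_iso P Q : apiso P Q -> homologous P Q
  | hom_move P Q : move P Q -> homologous P Q
  | hom_sym P Q : homologous P Q -> homologous Q P
  | hom_trans P Q R : homologous P Q -> homologous Q R -> homologous P R.

End AlphaPairings.

(* Main.v *)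
Require Import Defs.
From HB Require Import structures.
From mathcomp Require Import all_boot.
From Stdlib Require Import Permutation Classical.

Set Implicit Arguments.
Unset Strict Implicit.
Unset Printing Implicit Defensive.

Section Proofs.
Variables (alpha : Type) (tau : alpha -> alpha).
Hypothesis htau : involutive tau.

Local Notation pe := (pi_eq tau).

Lemma pe_tr u v w : pe u v -> pe v w -> pe u w.
Proof. exact: pi_trans. Qed.

Lemma cat_app (s t : seq (alpha * bool)) : s ++ t = List.app s t.
Proof. by elim: s => //= x s ->. Qed.

Lemma pi_perm (u v : piword alpha) : Permutation u v -> pe u v.
Proof.
elim=> [|x l l' _ IH|x y l|l l' l'' _ IH1 _ IH2].
- exact: pi_refl.
- exact: (pi_cat (pi_refl _ [:: x]) IH).
- exact: (pi_cat (pi_comm _ y x) (pi_refl _ l)).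
- exact: pi_trans IH1 IH2.
Qed.

Lemma letter_inv (x : alpha * bool) : pe [:: x; (x.1, ~~ x.2)] (pone alpha).
Proof.
case: x => a [] /=; first exact: pi_inv.
apply: pi_trans (pi_inv _ a); exact: pi_comm.
Qed.

Lemma pinv_cons (x : alpha * bool) u : pinv (x :: u) = pinv u ++ [:: (x.1, ~~ x.2)].
Proof. by rewrite /pinv /= rev_cons cats1. Qed.

Lemma cat_pinv (u : piword alpha) : pe (u ++ pinv u) (pone alpha).
Proof.
elim: u => [|x u IH]; first exact: pi_refl.
rewrite pinv_cons.
apply: pe_tr (_ : pe ([:: x; (x.1, ~~ x.2)] ++ (u ++ pinv u)) _).
  apply: pi_perm; rewrite /= !cat_app; apply: perm_skip.
  rewrite List.app_assoc; exact: Permutation_sym (Permutation_app_comm _ _).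
exact: (pi_cat (letter_inv x) IH).
Qed.

Lemma pinv_compat (u v : piword alpha) : pe u v -> pe (pinv u) (pinv v).
Proof.
move=> H.
rewrite -[pinv u]cats0.
apply: pe_tr (_ : pe (pinv u ++ (v ++ pinv v)) _).
  exact: (pi_cat (pi_refl _ _) (pi_sym (cat_pinv v))).
apply: pe_tr (_ : pe (pinv u ++ (u ++ pinv v)) _).
  exact: (pi_cat (pi_refl _ _) (pi_cat (pi_sym H) (pi_refl _ _))).
rewrite catA.
have H2 : pe (pinv u ++ u) (pone alpha).
  apply: pi_trans (cat_pinv u); apply: pi_perm; rewrite !cat_app.
  exact: Permutation_app_comm.
exact: (pi_cat H2 (pi_refl _ (pinv v))).
Qed.


Local Notation AP := (apairing tau).

Definition emb (Q P : AP) (h : carrier Q -> carrier P) :=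
  [/\ injective h, forall x, lab (h x) = lab x &
      forall x y, pe (pb (omap h x) (omap h y)) (pb x y)].
Arguments emb : clear implicits.

Lemma omap_comp (A B C : Type) (f : A -> B) (g : B -> C) x :
  omap g (omap f x) = omap (g \o f) x.
Proof. by case: x. Qed.

Lemma emb_comp (Q P R : AP) h g : emb Q P h -> emb P R g -> emb Q R (g \o h).
Proof.
case=> ih lh ph [ig lg pg]; split.
- exact: inj_comp.
- by move=> x /=; rewrite lg lh.
- move=> x y; have := pg (omap h x) (omap h y); rewrite !omap_comp => H.
  exact: pi_trans H (ph x y).
Qed.

Lemma emb_restrict (P : AP) (k : pred (carrier P)) : emb (@restrict _ _ P k) P val.
Proof. split=> //; [exact: val_inj | move=> x y; exact: pi_refl]. Qed.

Lemma iso_emb (P Q : AP) : apiso P Q -> exists f, emb P Q f /\ forall q, exists p, f p = q.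
Proof.
case=> f [bf lf pf]; exists f; split; first split=> //.
  exact: bij_inj.
case: bf => g _ gK q; by exists (g q); rewrite gK.
Qed.

Lemma emb_iso (Q R P : AP) h h' : emb Q P h -> emb R P h' ->
  (forall q, exists r, h' r = h q) -> (forall r, exists q, h q = h' r) -> apiso Q R.
Proof.
move=> [ih lh ph] [ih' lh' ph'] im1 im2.
have im1' q : exists r, h' r == h q by case: (im1 q) => r /eqP; exists r.
have im2' r : exists q, h q == h' r by case: (im2 r) => q /eqP; exists q.
pose f q := xchoose (im1' q); pose g r := xchoose (im2' r).
have fE q : h' (f q) = h q by apply/eqP; exact: (xchooseP (im1' q)).
have gE r : h (g r) = h' r by apply/eqP; exact: (xchooseP (im2' r)).
have oE x : omap h' (omap f x) = omap h x by case: x => //= q; rewrite fE.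
exists f; split.
- exists g => [q | r]; [apply: ih | apply: ih']; by rewrite ?fE ?gE.
- by move=> q; rewrite -lh' fE lh.
- move=> x y; apply: pi_trans (pi_sym (ph' _ _)) _; rewrite !oE; exact: ph.
Qed.

Lemma apiso_refl (P : AP) : apiso P P.
Proof.
exists id; split=> //; first by exists id.
by move=> x y; rewrite !omap_id; exact: pi_refl.
Qed.

Lemma id_emb (P : AP) : emb P P id.
Proof. by split=> // x y; rewrite !omap_id; exact: pi_refl. Qed.

Lemma apiso_sym (P Q : AP) : apiso P Q -> apiso Q P.
Proof.
case/iso_emb=> f [ef sf].
apply: (emb_iso (id_emb Q) ef) => [q | p]; [case: (sf q) => p <-; by exists p | by exists (f p)].
Qed.

Lemma apiso_trans (P Q R : AP) : apiso P Q -> apiso Q R -> apiso P R.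
Proof.
case/iso_emb=> f [ef sf] /iso_emb [g [eg sg]].
apply: (emb_iso (emb_comp ef eg) (id_emb R)) => [p | r]; first by exists (g (f p)).
case: (sg r) => q <-; case: (sf q) => p <-; by exists p.
Qed.

Lemma restrict_iso (P P' : AP) f (k : pred (carrier P)) (k' : pred (carrier P')) :
  emb P P' f -> (forall p', exists p, f p = p') -> (forall x, k' (f x) = k x) ->
  apiso (@restrict _ _ P k) (@restrict _ _ P' k').
Proof.
move=> ef sf kE.
apply: (emb_iso (emb_comp (emb_restrict k) ef) (emb_restrict k')).
- move=> q; have Hq : k' (f (val q)) by rewrite kE; exact: (valP q).
  by exists (exist (fun x => k' x) _ Hq).
- move=> r; case: (sf (val r)) => p pE.
  have Hp : k p by rewrite -kE pE; exact: (valP r).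
  by exists (exist (fun x => k x) _ Hp).
Qed.

Lemma restrict_eq (P : AP) (k k' : pred (carrier P)) : k =1 k' -> apiso (@restrict _ _ P k) (@restrict _ _ P k').
Proof.
move=> kk; apply: (restrict_iso (id_emb P)) => // p; by exists p.
Qed.

Lemma restrict_restrict (P : AP) (k1 : pred (carrier P)) (k2 : pred (carrier (@restrict _ _ P k1)))
  (k2' : pred (carrier P)) : (forall q, k2 q = k2' (val q)) ->
  apiso (restrict k2) (@restrict _ _ P [pred x | k1 x && k2' x]).
Proof.
move=> kE.
apply: (emb_iso (emb_comp (emb_restrict k2) (emb_restrict k1)) (emb_restrict _)).
- move=> q; have Hq : [pred x | k1 x && k2' x] (val (val q)).
    by rewrite /= -kE (valP (val q)) (valP q).
  by exists (exist (fun x => [pred x | k1 x && k2' x] x) _ Hq).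
- move=> r; have /andP [H1 H2] := valP r.
  have H2' : k2 (exist (fun x => k1 x) _ H1) by rewrite kE.
  by exists (exist (fun x => k2 x) _ H2').
Qed.


Lemma iso_emb2 (P Q : AP) : apiso P Q ->
  exists f g, [/\ emb P Q f, emb Q P g, cancel f g & cancel g f].
Proof.
case=> f [[g fK gK] lf pf]; exists f, g; split=> //.
- by split=> //; exact: can_inj fK.
- split; first exact: can_inj gK.
  + by move=> q; rewrite -lf gK.
  + move=> x y; have := pf (omap g x) (omap g y).
    rewrite !omap_comp !(eq_omap gK) !omap_id => H; exact: pi_sym H.
Qed.

Lemma annih_down (Q P : AP) h a : emb Q P h -> annihilating (h a) -> annihilating a.
Proof.
case=> _ _ ph H C; apply: pi_trans (pi_sym (ph (Some a) C)) _; exact: H.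
Qed.

Lemma twins_down (Q P : AP) h a b : emb Q P h -> twins (h a) (h b) -> twins a b.
Proof.
case=> ih lh ph [Hne Hl Hp]; split.
- by move=> E; apply: Hne; rewrite E.
- by rewrite -!lh.
- move=> C; apply: pi_trans (pi_sym (ph (Some a) C)) _.
  exact: pi_trans (Hp (omap h C)) (ph (Some b) C).
Qed.

Lemma twins_sym (P : AP) (A B : carrier P) : twins A B -> twins B A.
Proof.
case=> Hne Hl Hp; split.
- by move=> E; apply: Hne.
- by rewrite Hl htau.
- by move=> C; apply: pi_sym.
Qed.

Lemma annih_twins (P : AP) (A C : carrier P) : annihilating A -> twins A C -> annihilating C.
Proof.
move=> HA [_ _ Hp] D; apply: pi_trans (pi_sym (Hp D)) _; exact: HA.
Qed.

Lemma move_iso (P P' Q : AP) : apiso P P' -> move P Q -> exists Q', move P' Q' /\ apiso Q Q'.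
Proof.
case/iso_emb2=> f [g [ef eg fK gK]].
have sf : forall p', exists p, f p = p' by move=> p'; exists (g p').
have finj := can_inj fK.
case=> [A HA | A B HAB].
- exists (restrict (predC1 (f A))); split.
    apply: move_M1; apply: (annih_down eg); by rewrite fK.
  apply: (restrict_iso ef sf) => x /=; by rewrite (inj_eq finj).
- exists (restrict [pred x | (x != f A) && (x != f B)]); split.
    apply: move_M2; apply: (twins_down eg); by rewrite !fK.
  apply: (restrict_iso ef sf) => x /=; by rewrite !(inj_eq finj).
Qed.

Lemma reduces_iso (P R P' : AP) : reduces P R -> apiso P P' -> exists R', reduces P' R' /\ apiso R R'.
Proof.
move=> red; elim: red P' => [Q P' H | Q Q1 R0 mv _ IH P' H].
- by exists P'; split => //; exact: red_refl.
- have [Q1' [mv' H1]] := move_iso H mv.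
  have [R' [r' H2]] := IH _ H1.
  exists R'; split => //; exact: red_step mv' r'.
Qed.

Lemma primitive_iso (P Q : AP) : apiso P Q -> primitive P -> primitive Q.
Proof.
case/iso_emb2=> f [g [ef eg fK gK]] [H1 H2]; split.
- move=> a Ha; apply: (H1 (g a)); apply: (annih_down ef); by rewrite gK.
- move=> a b Hab; apply: (H2 (g a) (g b)); apply: (twins_down ef); by rewrite !gK.
Qed.

Lemma reduces_trans (P Q R : AP) : reduces P Q -> reduces Q R -> reduces P R.
Proof.
elim=> // P0 Q0 R0 mv _ IH H; exact: red_step mv (IH H).
Qed.

Lemma card_restrict (P : AP) (k : pred (carrier P)) x : ~~ k x ->
  #|carrier (restrict k)| < #|carrier P|.
Proof.
move=> Hx; rewrite card_sig.
rewrite -(cardC k) -addn1 leq_add2l; apply/card_gt0P.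
by exists x; rewrite inE.
Qed.

Lemma card_move (P Q : AP) : move P Q -> #|carrier Q| < #|carrier P|.
Proof.
case=> [A _ | A B _]; apply: (card_restrict (x := A)); by rewrite /= eqxx.
Qed.


Lemma prim_or_move (P : AP) : primitive P \/ exists Q, move P Q.
Proof.
case: (classic (exists A : carrier P, annihilating A)) => [[A HA]|nA].
  by right; exists (restrict (predC1 A)); exact: move_M1.
case: (classic (exists A B : carrier P, twins A B)) => [[A [B HAB]]|nT].
  by right; exists (restrict [pred x | (x != A) && (x != B)]); exact: move_M2.
left; split.
- by move=> A HA; apply: nA; exists A.
- by move=> A B HAB; apply: nT; exists A, B.
Qed.

Lemma exists_prim n (P : AP) : #|carrier P| < n -> exists Q, reduces P Q /\ primitive Q.
Proof.
elim: n P => [//|n IH] P Hn.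
case: (prim_or_move P) => [Hp | [Q mv]].
  by exists P; split => //; exact: red_refl.
have HQ : #|carrier Q| < n by rewrite ltnS in Hn; exact: leq_trans (card_move mv) Hn.
have [R [rQ pR]] := IH Q HQ.
by exists R; split => //; exact: red_step mv rQ.
Qed.

Lemma red1 (P Q : AP) : move P Q -> reduces P Q.
Proof. move=> mv; exact: red_step mv (red_refl _). Qed.

Lemma del1 (P : AP) (k1 : pred (carrier P)) (A' : carrier P) : k1 A' -> annihilating A' ->
  exists T, reduces (restrict k1) T /\ apiso T (restrict [pred x | k1 x && (x != A')]).
Proof.
move=> H HA.
pose a' : carrier (@restrict _ _ P k1) := exist (fun x => k1 x) A' H.
exists (restrict (predC1 a')); split.
  apply: red1; apply: move_M1; apply: (annih_down (emb_restrict k1)); exact: HA.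
apply: restrict_restrict => q /=; by rewrite -val_eqE.
Qed.

Lemma del2 (P : AP) (k1 : pred (carrier P)) (B C : carrier P) : k1 B -> k1 C -> twins B C ->
  exists T, reduces (restrict k1) T /\
    apiso T (restrict [pred x | k1 x && ((x != B) && (x != C))]).
Proof.
move=> HB HC HT.
pose b : carrier (@restrict _ _ P k1) := exist (fun x => k1 x) B HB.
pose c : carrier (@restrict _ _ P k1) := exist (fun x => k1 x) C HC.
exists (restrict [pred x | (x != b) && (x != c)]); split.
  apply: red1; apply: move_M2; apply: (twins_down (emb_restrict k1)); exact: HT.
apply: restrict_restrict => q /=; by rewrite -!val_eqE.
Qed.


Lemma swap_iso (P : AP) (e u v : carrier P) : twins e u -> twins e v -> u != v ->
  apiso (restrict [pred x | (x != e) && (x != u)]) (restrict [pred x | (x != e) && (x != v)]).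
Proof.
move=> [neu leu peu] [nev lev pev] nuv.
pose s x := if x == u then v else if x == v then u else x.
have sK : involutive s.
  move=> x; rewrite /s; case: (eqVneq x u) => [->|xu]; first by rewrite eqxx eq_sym (negbTE nuv) ?eqxx.
  case: (eqVneq x v) => [->|xv]; first by rewrite eqxx.
  by rewrite (negbTE xu) (negbTE xv).
have sinj : injective s by exact: inv_inj sK.
have se : s e = e.
  rewrite /s; case: (eqVneq e u) => [E|_]; first by case: neu.
  by case: (eqVneq e v) => [E|_] //; case: nev.
have su : s u = v by rewrite /s eqxx.
have luv : lab u = lab v by apply: (inv_inj htau); rewrite -leu -lev.
have row C : pe (pb (Some u) C) (pb (Some v) C) by exact: pi_trans (pi_sym (peu C)) (pev C).
have col C : pe (pb C (Some u)) (pb C (Some v)).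
  apply: pi_trans (pb_skew _ _) _; apply: pi_trans (pinv_compat (row C)) _.
  exact: pi_sym (pb_skew _ _).
have rs x D : pe (pb (omap s x) D) (pb x D).
  case: x => [z|] /=; last exact: pi_refl.
  rewrite /s; case: (eqVneq z u) => [->|zu]; first exact: pi_sym (row D).
  case: (eqVneq z v) => [->|zv]; [exact: row | exact: pi_refl].
have cs D y : pe (pb D (omap s y)) (pb D y).
  case: y => [z|] /=; last exact: pi_refl.
  rewrite /s; case: (eqVneq z u) => [->|zu]; first exact: pi_sym (col D).
  case: (eqVneq z v) => [->|zv]; [exact: col | exact: pi_refl].
have es : emb P P s.
  split=> //.
  - move=> x; rewrite /s; case: (eqVneq x u) => [->|_]; first by rewrite luv.
    by case: (eqVneq x v) => [->|_].
  - move=> x y; exact: pi_trans (rs _ _) (cs _ _).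
apply: (restrict_iso es) => [p | x /=]; first by exists (s p); rewrite sK.
by rewrite -{1}se -su !(inj_eq sinj).
Qed.

Lemma lc11 (P : AP) (A A' : carrier P) : annihilating A -> annihilating A' ->
  exists T1 T2, [/\ reduces (restrict (predC1 A)) T1, reduces (restrict (predC1 A')) T2 & apiso T1 T2].
Proof.
move=> HA HA'.
case: (eqVneq A A') => [<-|ne].
  by exists (restrict (predC1 A)), (restrict (predC1 A)); split; [exact: red_refl|exact: red_refl|exact: apiso_refl].
have ne' : A' != A by rewrite eq_sym.
have [T1 [r1 i1]] := del1 (k1 := predC1 A) (A' := A') ne' HA'.
have [T2 [r2 i2]] := del1 (k1 := predC1 A') (A' := A) ne HA.
exists T1, T2; split => //.
apply: apiso_trans i1 _; apply: apiso_sym; apply: apiso_trans i2 _.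
apply: restrict_eq => x /=; exact: andbC.
Qed.


Lemma lc12 (P : AP) (A B C : carrier P) : annihilating A -> twins B C ->
  exists T1 T2, [/\ reduces (restrict (predC1 A)) T1,
     reduces (restrict [pred x | (x != B) && (x != C)]) T2 & apiso T1 T2].
Proof.
move=> HA HT.
case: (eqVneq A B) => [E|nAB]; first subst B.
  have HC := annih_twins HA HT.
  have nCA : C != A by case: HT => H _ _; apply/eqP => E; apply: H.
  have [T1 [r1 i1]] := del1 (k1 := predC1 A) nCA HC.
  exists T1, (restrict [pred x | (x != A) && (x != C)]); split => //; first exact: red_refl.
case: (eqVneq A C) => [E|nAC]; first subst C.
  have HB := annih_twins HA (twins_sym HT).
  have nBA : B != A by rewrite eq_sym.
  have [T1 [r1 i1]] := del1 (k1 := predC1 A) nBA HB.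
  exists T1, (restrict [pred x | (x != B) && (x != A)]); split => //; first exact: red_refl.
  apply: apiso_trans i1 _; apply: restrict_eq => x /=; exact: andbC.
have nBA : B != A by rewrite eq_sym.
have nCA : C != A by rewrite eq_sym.
have [T1 [r1 i1]] := del2 (k1 := predC1 A) nBA nCA HT.
have HA2 : [pred x | (x != B) && (x != C)] A by rewrite /= nAB nAC.
have [T2 [r2 i2]] := del1 HA2 HA.
exists T1, T2; split => //.
apply: apiso_trans i1 _; apply: apiso_sym; apply: apiso_trans i2 _.
apply: restrict_eq => x /=; exact: andbC.
Qed.

Lemma lc22 (P : AP) (A B C D : carrier P) : twins A B -> twins C D ->
  exists T1 T2, [/\ reduces (restrict [pred x | (x != A) && (x != B)]) T1,
     reduces (restrict [pred x | (x != C) && (x != D)]) T2 & apiso T1 T2].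
Proof.
move=> HAB HCD.
suff [H|H] : apiso (restrict [pred x | (x != A) && (x != B)]) (restrict [pred x | (x != C) && (x != D)]) \/
  exists T1 T2, [/\ reduces (restrict [pred x | (x != A) && (x != B)]) T1,
     reduces (restrict [pred x | (x != C) && (x != D)]) T2 & apiso T1 T2] => //.
  by do 2 eexists; split; [exact: red_refl | exact: red_refl | exact: H].
have neq (X Y : carrier P) : twins X Y -> X != Y by case=> H _ _; apply/eqP.
case: (eqVneq A C) => [E|nAC]; first subst C.
  case: (eqVneq B D) => [E|nBD]; first subst D; first by left; exact: apiso_refl.
  by left; exact: swap_iso HAB HCD nBD.
case: (eqVneq A D) => [E|nAD]; first subst D.
  case: (eqVneq B C) => [E|nBC]; first subst C.
    by left; apply: restrict_eq => x /=; exact: andbC.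
  left; apply: apiso_trans (swap_iso HAB (twins_sym HCD) nBC) _.
  apply: restrict_eq => x /=; exact: andbC.
case: (eqVneq B C) => [E|nBC]; first subst C.
  left; apply: apiso_trans _ (swap_iso (twins_sym HAB) HCD nAD).
  apply: restrict_eq => x /=; exact: andbC.
case: (eqVneq B D) => [E|nBD]; first subst D.
  left; apply: apiso_trans (apiso_trans _ (swap_iso (twins_sym HAB) (twins_sym HCD) nAC)) _.
    apply: restrict_eq => x /=; exact: andbC.
  apply: restrict_eq => x /=; exact: andbC.
right.
have HC : [pred x | (x != A) && (x != B)] C by rewrite /= eq_sym nAC eq_sym nBC.
have HD : [pred x | (x != A) && (x != B)] D by rewrite /= eq_sym nAD eq_sym nBD.
have HA : [pred x | (x != C) && (x != D)] A by rewrite /= nAC nAD.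
have HB : [pred x | (x != C) && (x != D)] B by rewrite /= nBC nBD.
have [T1 [r1 i1]] := del2 HC HD HCD.
have [T2 [r2 i2]] := del2 HA HB HAB.
exists T1, T2; split => //.
apply: apiso_trans i1 _; apply: apiso_sym; apply: apiso_trans i2 _.
apply: restrict_eq => x /=; exact: andbC.
Qed.


Lemma lc (P Q1 Q2 : AP) : move P Q1 -> move P Q2 ->
  exists T1 T2, [/\ reduces Q1 T1, reduces Q2 T2 & apiso T1 T2].
Proof.
case=> [A HA|A B HAB]; case=> [A' HA'|C D HCD].
- exact: lc11.
- exact: lc12.
- have [T1 [T2 [r1 r2 i]]] := lc12 HA' HAB.
  by exists T2, T1; split => //; exact: apiso_sym.
- exact: lc22.
Qed.

Lemma uniq_prim n : forall P : AP, #|carrier P| < n -> forall R1 R2,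
  reduces P R1 -> primitive R1 -> reduces P R2 -> primitive R2 -> apiso R1 R2.
Proof.
elim: n => [//|n IH] P Hn R1 R2 r1 p1 r2 p2.
have nomove (X Y : AP) : primitive X -> move X Y -> False.
  by move=> [H1 H2]; case=> [A HA|A B HAB]; [apply: (H1 A) | apply: (H2 A B)].
destruct r1 as [P0|P0 Q1 R0 m1 r1].
  destruct r2 as [P1|P1 Q2 R3 m2 r2]; first exact: apiso_refl.
  by case: (nomove _ _ p1 m2).
destruct r2 as [P1|P1 Q2 R3 m2 r2]; first by case: (nomove _ _ p2 m1).
have [T1 [T2 [t1 t2 i]]] := lc m1 m2.
have HQ1 : #|carrier Q1| < n by rewrite ltnS in Hn; exact: leq_trans (card_move m1) Hn.
have HQ2 : #|carrier Q2| < n by rewrite ltnS in Hn; exact: leq_trans (card_move m2) Hn.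
have [U [u pU]] := exists_prim (ltnSn #|carrier T1|).
have i1 := IH Q1 HQ1 R0 U r1 p1 (reduces_trans t1 u) pU.
have [U' [u' iU]] := reduces_iso u i.
have pU' := primitive_iso iU pU.
have i2 := IH Q2 HQ2 R3 U' r2 p2 (reduces_trans t2 u') pU'.
exact: apiso_trans (apiso_trans i1 iU) (apiso_sym i2).
Qed.

Lemma hom_prim (P Q : AP) : homologous P Q -> forall RP RQ,
  reduces P RP -> primitive RP -> reduces Q RQ -> primitive RQ -> apiso RP RQ.
Proof.
elim=> {P Q} [P Q H|P Q mv|P Q _ IH|P Q R _ IH1 _ IH2] RP RQ rP pP rQ pQ.
- have [RQ' [r' i']] := reduces_iso rQ (apiso_sym H).
  have pQ' := primitive_iso i' pQ.
  have := uniq_prim (ltnSn _) rP pP r' pQ'.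
  move=> i; exact: apiso_trans i (apiso_sym i').
- have r2 := red_step mv rQ.
  exact: (uniq_prim (ltnSn _) rP pP r2 pQ).
- exact: apiso_sym (IH _ _ rQ pQ rP pP).
- have [RQ0 [r0 p0]] := exists_prim (ltnSn #|carrier Q|).
  exact: apiso_trans (IH1 _ _ rP pP r0 p0) (IH2 _ _ r0 p0 rQ pQ).
Qed.

End Proofs.

Theorem lemma7p1 (alpha : Type) (tau : alpha -> alpha) (htau : involutive tau) :
  (forall P : apairing tau, exists Q : apairing tau, reduces P Q /\ primitive Q) /\
  (forall P Q : apairing tau,
      primitive P -> primitive Q -> homologous P Q -> apiso P Q).
Proof.
split.
- move=> P; exact: exists_prim (ltnSn _).
- move=> P Q pP pQ H; apply: (hom_prim htau H) => //; exact: red_refl.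
Qed.
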